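(* Let $x_0>0$, $L>0$, and let $\gamma$ be an admissible curve parametrized by arc length. Let $\mathcal V$ be a first-order area-preserving admissible variation of $\gamma$ with velocity $X$ and acceleration $X'$. Then there exists an area-preserving admissible variation $\tilde{\mathcal V}$ of $\gamma$, with velocity $\tilde X$ and acceleration $\tilde X'$, such that $\tilde X=X$ on $[0,2L]$ and $\tilde X'=X'$ on $[0,\frac L2]\cup[\frac{3L}2,2L]$.
   Context: Notation: $(\xi,\eta)^\perp=(\eta,-\xi)$; for a regular curve $\gamma\in C^2([0,2L],\mathbb R^2)$ ($|\dot\gamma|>0$), curvature $H=\langle\dot\gamma,\ddot\gamma^\perp\rangle/|\dot\gamma|^3$, normal $N=\dot\gamma^\perp/|\dot\gamma|$; strictly counterclockwise means $H>0$. A curve $\gamma=(x,y)$ is admissible if $\gamma\in C^\infty([0,2L],\mathbb R^2)$ is regular, strictly counterclockwise, injective, $\gamma(0)=(x_0,0)$, $\gamma(2L)=(-x_0,0)$, $y>0$ on $(0,2L)$. Enclosed area: $\mathcal A(\gamma)=\frac12\int_0^{2L}(x\dot y-\dot x y)\,ds$. An admissible variation is a smooth $\mathcal V:[0,2L]\times[-t_{\mathcal V},t_{\mathcal V}]\to\mathbb R^2$ with $\mathcal V(\cdot,0)=\gamma$ and $\gamma_t=\mathcal V(\cdot,t)$ admissible for all $t$; velocity $X=\partial_t\mathcal V|_{t=0}$, acceleration $X'=\partial_t^2\mathcal V|_{t=0}$. It is area-preserving if $\mathcal A(\gamma_t)=\mathcal A(\gamma)$ for all $t$, and first-order area-preserving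 if $\int_0^{2L}\langle X,N\rangle\,ds=0$ (for arc-length parametrized $\gamma$). *)

(* Defs.v *)
From Stdlib Require Import Reals List.
From Coquelicot Require Import Coquelicot.
Open Scope R_scope.

(** A function on a closed interval / closed rectangle is C^oo
    iff it is the restriction of a C^oo function on R / R^2 (Whitney/Seeley
    extension).  We therefore model curves and variations as globally defined
    smooth maps and only impose conditions on [0,2L] resp. [0,2L]x[-t,t]. *)

Definition smooth1 (f : R -> R) : Prop := forall (n : nat) (x : R), ex_derive_n f n x.

Definition pd (b : bool) (f : R -> R -> R) : R -> R -> R :=
  fun s t => if b then Derive (fun u => f u t) s else Derive (fun u => f s u) t.

Definition iter_pd (ds : list bool) (f : R -> R -> R) : R -> R -> R :=
  fold_right pd f ds.

Definition smooth2 (f : R -> R -> R) : Prop :=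
  forall (ds : list bool) (s t : R),
    continuity_2d_pt (iter_pd ds f) s t /\
    ex_derive (fun u => iter_pd ds f u t) s /\
    ex_derive (fun u => iter_pd ds f s u) t.

Definition cx (g : R -> R * R) : R -> R := fun s => fst (g s).
Definition cy (g : R -> R * R) : R -> R := fun s => snd (g s).

Definition dot (u v : R * R) : R := fst u * fst v + snd u * snd v.
Definition perp (u : R * R) : R * R := (snd u, - fst u).

Definition vel (g : R -> R * R) (s : R) : R * R :=
  (Derive (cx g) s, Derive (cy g) s).
Definition acc (g : R -> R * R) (s : R) : R * R :=
  (Derive_n (cx g) 2 s, Derive_n (cy g) 2 s).

Definition speed (g : R -> R * R) (s : R) : R := sqrt (dot (vel g s) (vel g s)).

Definition curvature (g : R -> R * R) (s : R) : R :=
  dot (vel g s) (perp (acc g s)) / (speed g s) ^ 3.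

Definition normal (g : R -> R * R) (s : R) : R * R :=
  (fst (perp (vel g s)) / speed g s, snd (perp (vel g s)) / speed g s).

Definition admissible (x0 L : R) (g : R -> R * R) : Prop :=
  smooth1 (cx g) /\ smooth1 (cy g) /\
  (forall s, 0 <= s <= 2 * L -> 0 < speed g s) /\
  (forall s, 0 <= s <= 2 * L -> 0 < curvature g s) /\
  (forall s1 s2, 0 <= s1 <= 2 * L -> 0 <= s2 <= 2 * L -> g s1 = g s2 -> s1 = s2) /\
  g 0 = (x0, 0) /\ g (2 * L) = (- x0, 0) /\
  (forall s, 0 < s < 2 * L -> 0 < cy g s).

Definition arclength_param (L : R) (g : R -> R * R) : Prop :=
  forall s, 0 <= s <= 2 * L -> speed g s = 1.

Definition area (L : R) (g : R -> R * R) : R :=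
  / 2 * RInt (fun s => cx g s * Derive (cy g) s - Derive (cx g) s * cy g s) 0 (2 * L).

Definition curve_at (V : R -> R -> R * R) (t : R) : R -> R * R := fun s => V s t.

Definition admissible_variation (x0 L : R) (g : R -> R * R)
    (V : R -> R -> R * R) (tV : R) : Prop :=
  0 < tV /\
  smooth2 (fun s t => fst (V s t)) /\ smooth2 (fun s t => snd (V s t)) /\
  (forall s, 0 <= s <= 2 * L -> V s 0 = g s) /\
  (forall t, - tV <= t <= tV -> admissible x0 L (curve_at V t)).

Definition var_velocity (V : R -> R -> R * R) (s : R) : R * R :=
  (Derive (fun t => fst (V s t)) 0, Derive (fun t => snd (V s t)) 0).
Definition var_acceleration (V : R -> R -> R * R) (s : R) : R * R :=
  (Derive_n (fun t => fst (V s t)) 2 0, Derive_n (fun t => snd (V s t)) 2 0).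

Definition area_preserving (L : R) (g : R -> R * R) (V : R -> R -> R * R) (tV : R) : Prop :=
  forall t, - tV <= t <= tV -> area L (curve_at V t) = area L g.

Definition first_order_area_preserving (L : R) (g : R -> R * R) (V : R -> R -> R * R) : Prop :=
  RInt (fun s => dot (var_velocity V s) (normal g s)) 0 (2 * L) = 0.

(* Main.v *)
Require Import Defs.
From Stdlib Require Import Reals List Lia Lra FunctionalExtensionality Classical.
From Coquelicot Require Import Coquelicot.
Open Scope R_scope.

Definition cond0 (F : R -> R -> R) : Prop :=
  forall s t, continuity_2d_pt F s t /\ ex_derive (fun u => F u t) s /\ ex_derive (fun u => F s u) t.

Definition Qn (n : nat) (F : R -> R -> R) : Prop :=
  forall ds, (length ds <= n)%nat -> cond0 (iter_pd ds F).

Lemma iter_pd_app : forall ds ds' F, iter_pd (ds ++ ds') F = iter_pd ds (iter_pd ds' F).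
Proof. intros. unfold iter_pd. now rewrite fold_right_app. Qed.

Lemma smooth2_Qn : forall F, smooth2 F <-> forall n, Qn n F.
Proof.
  split.
  - intros H n ds _ s t. apply H.
  - intros H ds s t. apply (H (length ds) ds (le_n _)).
Qed.

Lemma Qn_0 : forall F, Qn 0 F <-> cond0 F.
Proof.
  split.
  - intros H. apply (H nil). simpl; lia.
  - intros H ds Hl. destruct ds; [exact H| simpl in Hl; lia].
Qed.

Lemma Qn_S : forall n F, Qn (S n) F <-> cond0 F /\ forall b, Qn n (pd b F).
Proof.
  split.
  - intros H. split.
    + apply (H nil). simpl; lia.
    + intros b ds Hl. change (pd b F) with (iter_pd (b :: nil) F).
      rewrite <- iter_pd_app. apply H. rewrite length_app. simpl. lia.
  - intros [H0 H] ds Hl. destruct (list_eq_dec Bool.bool_dec ds nil) as [->|Hne].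
    + exact H0.
    + destruct (exists_last Hne) as [ds' [b ->]].
      rewrite iter_pd_app. apply H. rewrite length_app in Hl. simpl in Hl. lia.
Qed.

Lemma Qn_mono : forall n F, Qn (S n) F -> Qn n F.
Proof. intros n F H ds Hl. apply H. lia. Qed.

Lemma Qn_le : forall m n F, (m <= n)%nat -> Qn n F -> Qn m F.
Proof. intros m n F Hmn H ds Hl. apply H. lia. Qed.

Lemma Qn_cond0 : forall n F, Qn n F -> cond0 F.
Proof. intros n F H. apply Qn_0. apply (Qn_le 0 n); auto; lia. Qed.

Lemma smooth2_pd : forall b F, smooth2 F -> smooth2 (pd b F).
Proof. intros b F H ds s t. change (pd b F) with (iter_pd (b::nil) F).
  rewrite <- iter_pd_app. apply H. Qed.

Lemma smooth2_iter : forall ds F, smooth2 F -> smooth2 (iter_pd ds F).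
Proof. intros ds F H ds' s t. rewrite <- iter_pd_app. apply H. Qed.

Lemma smooth2_cond0 : forall F, smooth2 F -> cond0 F.
Proof. intros F H s t. apply (H nil). Qed.

Lemma cont_of_ex_derive : forall f x, ex_derive f x -> continuity_pt f x.
Proof. intros f x H. apply continuity_pt_filterlim. apply (ex_derive_continuous f x H). Qed.

Lemma cond0_plus : forall F G, cond0 F -> cond0 G -> cond0 (fun s t => F s t + G s t).
Proof.
  intros F G HF HG s t. destruct (HF s t) as [a [b c]]. destruct (HG s t) as [a' [b' c']].
  split; [|split].
  - now apply continuity_2d_pt_plus.
  - now apply (ex_derive_plus (fun u => F u t) (fun u => G u t)).
  - now apply (ex_derive_plus (fun u => F s u) (fun u => G s u)).
Qed.

Lemma cond0_mult : forall F G, cond0 F -> cond0 G -> cond0 (fun s t => F s t * G s t).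
Proof.
  intros F G HF HG s t. destruct (HF s t) as [a [b c]]. destruct (HG s t) as [a' [b' c']].
  split; [|split].
  - now apply continuity_2d_pt_mult.
  - now apply (ex_derive_mult (fun u => F u t) (fun u => G u t)).
  - now apply (ex_derive_mult (fun u => F s u) (fun u => G s u)).
Qed.

Lemma cond0_comp : forall (h : R -> R) F, (forall s t, ex_derive h (F s t)) -> cond0 F ->
  cond0 (fun s t => h (F s t)).
Proof.
  intros h F Hh HF s t. destruct (HF s t) as [a [b c]].
  split; [|split].
  - apply continuity_1d_2d_pt_comp; auto. now apply cont_of_ex_derive.
  - now apply (ex_derive_comp h (fun u => F u t)).
  - now apply (ex_derive_comp h (fun u => F s u)).
Qed.

Lemma pd_plus : forall b F G, cond0 F -> cond0 G ->
  pd b (fun s t => F s t + G s t) = (fun s t => pd b F s t + pd b G s t).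
Proof.
  intros b F G HF HG. apply functional_extensionality; intro s.
  apply functional_extensionality; intro t. destruct (HF s t) as [a [b1 c]].
  destruct (HG s t) as [a' [b' c']]. destruct b; simpl.
  - now rewrite (Derive_plus (fun u => F u t) (fun u => G u t)).
  - now rewrite (Derive_plus (fun u => F s u) (fun u => G s u)).
Qed.

Lemma pd_mult : forall b F G, cond0 F -> cond0 G ->
  pd b (fun s t => F s t * G s t) = (fun s t => pd b F s t * G s t + F s t * pd b G s t).
Proof.
  intros b F G HF HG. apply functional_extensionality; intro s.
  apply functional_extensionality; intro t. destruct (HF s t) as [a [b1 c]].
  destruct (HG s t) as [a' [b' c']]. destruct b; simpl.
  - now rewrite (Derive_mult (fun u => F u t) (fun u => G u t)).
  - now rewrite (Derive_mult (fun u => F s u) (fun u => G s u)).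
Qed.

Lemma pd_comp : forall b (h : R -> R) F, (forall s t, ex_derive h (F s t)) -> cond0 F ->
  pd b (fun s t => h (F s t)) = (fun s t => Derive h (F s t) * pd b F s t).
Proof.
  intros b h F Hh HF. apply functional_extensionality; intro s.
  apply functional_extensionality; intro t. destruct (HF s t) as [a [b1 c]].
  destruct b; simpl.
  - rewrite (Derive_comp h (fun u => F u t)); auto. ring.
  - rewrite (Derive_comp h (fun u => F s u)); auto. ring.
Qed.

Lemma Qn_plus : forall n F G, Qn n F -> Qn n G -> Qn n (fun s t => F s t + G s t).
Proof.
  induction n; intros F G HF HG.
  - apply Qn_0. apply Qn_0 in HF. apply Qn_0 in HG. now apply cond0_plus.
  - apply Qn_S in HF as [HF0 HF]. apply Qn_S in HG as [HG0 HG]. apply Qn_S. split.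
    + now apply cond0_plus.
    + intros b. rewrite pd_plus by auto. auto.
Qed.

Lemma Qn_mult : forall n F G, Qn n F -> Qn n G -> Qn n (fun s t => F s t * G s t).
Proof.
  induction n; intros F G HF HG.
  - apply Qn_0. apply Qn_0 in HF. apply Qn_0 in HG. now apply cond0_mult.
  - pose proof (Qn_mono _ _ HF) as HF'. pose proof (Qn_mono _ _ HG) as HG'.
    apply Qn_S in HF as [HF0 HF]. apply Qn_S in HG as [HG0 HG]. apply Qn_S. split.
    + now apply cond0_mult.
    + intros b. rewrite pd_mult by auto. apply Qn_plus; auto.
Qed.

Definition sm_on (P : R -> Prop) (h : R -> R) : Prop :=
  forall k x, P x -> ex_derive (Derive_n h k) x.

Lemma Derive_n_Derive : forall h k x, Derive_n (Derive h) k x = Derive_n h (S k) x.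
Proof.
  intros h k. induction k; intros x.
  - reflexivity.
  - simpl. f_equal. apply functional_extensionality; intro y. apply IHk.
Qed.

Lemma sm_on_Derive : forall P h, sm_on P h -> sm_on P (Derive h).
Proof.
  intros P h H k x Hx.
  assert (E : Derive_n (Derive h) k = Derive_n h (S k)).
  { apply functional_extensionality; intro; apply Derive_n_Derive. }
  rewrite E. apply H. auto.
Qed.

Lemma Qn_comp : forall n (P : R -> Prop) h F, sm_on P h -> (forall s t, P (F s t)) ->
  Qn n F -> Qn n (fun s t => h (F s t)).
Proof.
  induction n; intros P h F Hh HP HF.
  - apply Qn_0. apply Qn_0 in HF. apply cond0_comp; auto.
    intros s t. apply (Hh 0%nat). auto.
  - pose proof (Qn_mono _ _ HF) as HF'.
    apply Qn_S in HF as [HF0 HF]. apply Qn_S. split.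
    + apply cond0_comp; auto. intros s t. apply (Hh 0%nat). auto.
    + intros b. rewrite pd_comp; auto.
      * apply Qn_mult; auto. apply (IHn P (Derive h) F); auto. now apply sm_on_Derive.
      * intros s t. apply (Hh 0%nat). auto.
Qed.

Lemma smooth2_plus : forall F G, smooth2 F -> smooth2 G -> smooth2 (fun s t => F s t + G s t).
Proof. intros F G HF HG. apply smooth2_Qn. intros n. apply Qn_plus; now apply smooth2_Qn. Qed.
Lemma smooth2_mult : forall F G, smooth2 F -> smooth2 G -> smooth2 (fun s t => F s t * G s t).
Proof. intros F G HF HG. apply smooth2_Qn. intros n. apply Qn_mult; now apply smooth2_Qn. Qed.
Lemma smooth2_comp : forall P h F, sm_on P h -> (forall s t, P (F s t)) -> smooth2 F ->
  smooth2 (fun s t => h (F s t)).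
Proof. intros P h F Hh HP HF. apply smooth2_Qn. intros n. apply (Qn_comp n P); auto; now apply smooth2_Qn. Qed.

Definition sm1 (f : R -> R) := forall k x, ex_derive (Derive_n f k) x.

Lemma smooth1_sm1 : forall f, smooth1 f <-> sm1 f.
Proof.
  split.
  - intros H k x. apply (H (S k) x).
  - intros H n x. destruct n; simpl; [exact I| apply H].
Qed.

Lemma sm1_on : forall f, sm1 f -> sm_on (fun _ => True) f.
Proof. intros f H k x _. apply H. Qed.

Lemma sm1_Derive : forall f, sm1 f -> sm1 (Derive f).
Proof. intros f H k x.
  assert (E : Derive_n (Derive f) k = Derive_n f (S k)).
  { apply functional_extensionality; intro; apply Derive_n_Derive. }
  rewrite E. apply H. Qed.

Lemma Qn_const : forall n c, Qn n (fun _ _ => c).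
Proof.
  induction n; intros c.
  - apply Qn_0. intros s t. split; [|split].
    + apply continuity_2d_pt_const.
    + apply ex_derive_const.
    + apply ex_derive_const.
  - apply Qn_S. split.
    + apply (Qn_cond0 n). apply (IHn c).
    + intros b. replace (pd b (fun _ _ => c)) with (fun _ _ : R => 0). apply IHn.
      apply functional_extensionality; intro s. apply functional_extensionality; intro t.
      destruct b; simpl; now rewrite Derive_const.
Qed.

Lemma smooth2_const : forall c, smooth2 (fun _ _ => c).
Proof. intros c. apply smooth2_Qn. intros n. apply Qn_const. Qed.

Lemma Qn_fs : forall n f, sm1 f -> Qn n (fun s t => f s).
Proof.
  induction n; intros f Hf.
  - apply Qn_0. intros s t. split; [|split].
    + apply (continuity_1d_2d_pt_comp f (fun u v => u)).
      apply cont_of_ex_derive, (Hf 0%nat). apply continuity_2d_pt_id1.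
    + apply (Hf 0%nat).
    + apply ex_derive_const.
  - apply Qn_S. split.
    + apply (Qn_cond0 n). apply (IHn f Hf).
    + intros b. destruct b.
      * replace (pd true (fun s _ => f s)) with (fun s (_:R) => Derive f s).
        apply IHn. now apply sm1_Derive. reflexivity.
      * replace (pd false (fun s _ => f s)) with (fun _ _ : R => 0). apply Qn_const.
        apply functional_extensionality; intro s. apply functional_extensionality; intro t.
        simpl; now rewrite Derive_const.
Qed.

Lemma Qn_ft : forall n f, sm1 f -> Qn n (fun s t => f t).
Proof.
  induction n; intros f Hf.
  - apply Qn_0. intros s t. split; [|split].
    + apply (continuity_1d_2d_pt_comp f (fun u v => v)).
      apply cont_of_ex_derive, (Hf 0%nat). apply continuity_2d_pt_id2.
    + apply ex_derive_const.
    + apply (Hf 0%nat).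
  - apply Qn_S. split.
    + apply (Qn_cond0 n). apply (IHn f Hf).
    + intros b. destruct b.
      * replace (pd true (fun _ t => f t)) with (fun _ _ : R => 0). apply Qn_const.
        apply functional_extensionality; intro s. apply functional_extensionality; intro t.
        simpl; now rewrite Derive_const.
      * replace (pd false (fun _ t => f t)) with (fun (_:R) t => Derive f t).
        apply IHn. now apply sm1_Derive. reflexivity.
Qed.

Lemma smooth2_fs : forall f, sm1 f -> smooth2 (fun s t => f s).
Proof. intros. apply smooth2_Qn. intros; now apply Qn_fs. Qed.
Lemma smooth2_ft : forall f, sm1 f -> smooth2 (fun s t => f t).
Proof. intros. apply smooth2_Qn. intros; now apply Qn_ft. Qed.

Lemma Qn_id2 : forall n, Qn n (fun s t => t).
Proof.
  induction n.
  - apply Qn_0. intros s t. split; [|split].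
    + apply continuity_2d_pt_id2.
    + apply ex_derive_const.
    + apply ex_derive_id.
  - apply Qn_S. split.
    + apply (Qn_cond0 n). apply IHn.
    + intros b. destruct b.
      * replace (pd true (fun _ t => t)) with (fun _ _ : R => 0). apply Qn_const.
        apply functional_extensionality; intro s. apply functional_extensionality; intro t.
        simpl; now rewrite Derive_const.
      * replace (pd false (fun _ t => t)) with (fun _ _ : R => 1). apply Qn_const.
        apply functional_extensionality; intro s. apply functional_extensionality; intro t.
        simpl; now rewrite Derive_id.
Qed.
Lemma smooth2_id2 : smooth2 (fun s t => t).
Proof. apply smooth2_Qn. apply Qn_id2. Qed.

Lemma Derive_n_slice_s : forall F t k, Derive_n (fun s => F s t) k = (fun s => iter_pd (repeat true k) F s t).
Proof.
  intros F t k. induction k.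
  - reflexivity.
  - apply functional_extensionality; intro s. simpl. rewrite IHk. reflexivity.
Qed.
Lemma Derive_n_slice_t : forall F s k, Derive_n (fun t => F s t) k = (fun t => iter_pd (repeat false k) F s t).
Proof.
  intros F s k. induction k.
  - reflexivity.
  - apply functional_extensionality; intro t. simpl. rewrite IHk. reflexivity.
Qed.

Lemma smooth2_slice_s : forall F t, smooth2 F -> sm1 (fun s => F s t).
Proof. intros F t H k x. rewrite Derive_n_slice_s. apply (H (repeat true k) x t). Qed.
Lemma smooth2_slice_t : forall F s, smooth2 F -> sm1 (fun t => F s t).
Proof. intros F s H k x. rewrite Derive_n_slice_t. apply (H (repeat false k) s x). Qed.

Lemma cont2d_swap : forall F s t, continuity_2d_pt F s t -> continuity_2d_pt (fun u v => F v u) t s.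
Proof.
  intros F s t H eps. destruct (H eps) as [d Hd]. exists d. intros u v Hu Hv. now apply Hd.
Qed.

Definition Iab (F : R -> R -> R) a b : R -> R := fun t => RInt (fun s => F s t) a b.

Lemma ex_RInt_slice : forall F a b t, cond0 F -> ex_RInt (fun s => F s t) a b.
Proof.
  intros F a b t H. apply (@ex_RInt_continuous R_CompleteNormedModule). intros z _.
  apply (@ex_derive_continuous R_AbsRing R_NormedModule). apply (H z t).
Qed.

Lemma Iab_is_derive : forall F a b t, smooth2 F ->
  is_derive (Iab F a b) t (Iab (pd false F) a b t).
Proof.
  intros F a b t H. unfold Iab.
  apply (is_derive_RInt_param (fun t s => F s t) a b t).
  - apply filter_forall. intros x s _. apply (smooth2_cond0 F H s x).
  - intros s _. apply (cont2d_swap (pd false F) s t).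
    apply (smooth2_cond0 _ (smooth2_pd false F H) s t).
  - apply filter_forall. intros y. apply ex_RInt_slice. now apply smooth2_cond0.
Qed.

Lemma Iab_Derive : forall F a b, smooth2 F -> Derive (Iab F a b) = Iab (pd false F) a b.
Proof.
  intros F a b H. apply functional_extensionality; intro t.
  apply is_derive_unique. now apply Iab_is_derive.
Qed.

Lemma Iab_Derive_n : forall k F a b, smooth2 F -> Derive_n (Iab F a b) k = Iab (iter_pd (repeat false k) F) a b.
Proof.
  induction k; intros F a b H.
  - reflexivity.
  - apply functional_extensionality; intro t. simpl. rewrite IHk by auto.
    rewrite Iab_Derive. reflexivity. now apply smooth2_iter.
Qed.

Lemma Iab_sm1 : forall F a b, smooth2 F -> sm1 (Iab F a b).
Proof.
  intros F a b H k x. rewrite Iab_Derive_n by auto.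
  eexists. apply Iab_is_derive. now apply smooth2_iter.
Qed.

Lemma Derive_n_inv : forall n, exists c, forall x, 0 < x -> Derive_n Rinv n x = c / x ^ (S n)
   /\ ex_derive (Derive_n Rinv n) x.
Proof.
  induction n.
  - exists 1. intros x Hx. split.
    + simpl. field. lra.
    + simpl. apply (ex_derive_ext (fun x => / x)). reflexivity.
      auto_derive. lra.
  - destruct IHn as [c Hc]. exists (- c * INR (S n)). intros x Hx.
    assert (Hloc : locally x (fun y => Derive_n Rinv n y = c / y ^ (S n))).
    { exists (mkposreal x Hx). intros y Hy. apply Hc.
      unfold ball in Hy; simpl in Hy; unfold AbsRing_ball, abs, minus, plus, opp in Hy; simpl in Hy.
      apply Rabs_lt_between in Hy. lra. }
    assert (Hd : forall z, 0 < z -> is_derive (fun y => c / y ^ (S n)) z (- c * INR (S n) / z ^ (S (S n)))).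
    { intros z Hz. assert (Hzn : z ^ n <> 0) by (apply pow_nonzero; lra). auto_derive.
      - intro Hc0. apply Rmult_integral in Hc0. destruct Hc0; [lra|tauto].
      - destruct n as [|m]; simpl; [field; lra|]. generalize (match m with 0%nat => 1 | S _ => INR m + 1 end). intros k. assert (z ^ m <> 0) by (apply pow_nonzero; lra). field. split; lra. }
    split.
    + simpl Derive_n at 1. rewrite (Derive_ext_loc _ (fun y => c / y ^ (S n))).
      * apply is_derive_unique. apply Hd. auto.
      * exact Hloc.
    + simpl. assert (Hloc2 : locally x (fun y => Derive (Derive_n Rinv n) y = - c * INR (S n) / y ^ (S (S n)))).
      { exists (mkposreal (x/2) ltac:(lra)). intros y Hy.
        unfold ball in Hy; simpl in Hy; unfold AbsRing_ball, abs, minus, plus, opp in Hy; simpl in Hy.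
        apply Rabs_lt_between in Hy. assert (Hy0 : 0 < y) by lra.
        rewrite (Derive_ext_loc _ (fun y => c / y ^ (S n))).
        - apply is_derive_unique. apply Hd. auto.
        - exists (mkposreal y Hy0). intros z Hz. apply Hc.
          unfold ball in Hz; simpl in Hz; unfold AbsRing_ball, abs, minus, plus, opp in Hz; simpl in Hz.
          apply Rabs_lt_between in Hz. lra. }
      apply (ex_derive_ext_loc (fun y => - c * INR (S n) / y ^ (S (S n)))).
      * eapply filter_imp; [|exact Hloc2]. intros y Hy; now rewrite Hy.
      * assert (Hzn : x ^ n <> 0) by (apply pow_nonzero; lra). auto_derive.
        intro Hc0. apply Rmult_integral in Hc0. destruct Hc0 as [Hc0|Hc0]; [lra|].
        apply Rmult_integral in Hc0. destruct Hc0; [lra|tauto].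
Qed.

Lemma sm_on_inv : sm_on (fun x => 0 < x) Rinv.
Proof. intros k x Hx. destruct (Derive_n_inv k) as [c Hc]. apply Hc. auto. Qed.

Lemma cont2d_slice0 : forall F a, continuity_2d_pt F a 0 -> continuity_pt (fun x => F x 0) a.
Proof.
  intros F a H. apply continuity_pt_locally. intros eps. destruct (H eps) as [d Hd].
  exists d. intros y Hy. apply Hd.
  - unfold ball in Hy; simpl in Hy; unfold AbsRing_ball, abs, minus, plus, opp in Hy; simpl in Hy. exact Hy.
  - rewrite Rminus_diag, Rabs_R0. apply cond_pos.
Qed.

Lemma tube : forall F a b, a <= b -> (forall s, a <= s <= b -> continuity_2d_pt F s 0) ->
  (forall s, a <= s <= b -> 0 < F s 0) ->
  exists d, 0 < d /\ forall s t, a <= s <= b -> Rabs t <= d -> 0 < F s t.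
Proof.
  intros F a b Hab Hc Hp.
  destruct (continuity_ab_min (fun x => F x 0) a b Hab) as [mx [Hmx Hmxab]].
  { intros c Hc'. apply cont2d_slice0. auto. }
  set (m := F mx 0). assert (Hm : 0 < m) by (apply Hp; auto).
  destruct (uniform_continuity_2d_1d F a b 0 Hc (mkposreal (m/2) ltac:(lra))) as [d Hd].
  exists (d/2). split. destruct d; simpl; lra.
  intros s t Hs Ht. specialize (Hd s 0 s t Hs).
  assert (H1 : 0 - d <= 0 <= 0 + d) by (destruct d; simpl; lra).
  assert (H2 : 0 - d <= t <= 0 + d) by (apply Rabs_le_between in Ht; destruct d; simpl in *; lra).
  specialize (Hd H1 Hs H2). rewrite Rminus_diag, Rabs_R0 in Hd.
  specialize (Hd (cond_pos d)). simpl in Hd. apply Rabs_lt_between in Hd.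
  specialize (Hmx s Hs). simpl in Hmx. fold m in Hmx. lra.
Qed.

Inductive PE := PC (c : R) | PX | PA (p q : PE) | PM (p q : PE).
Fixpoint ev (p : PE) (u : R) : R :=
  match p with PC c => c | PX => u | PA p q => ev p u + ev q u | PM p q => ev p u * ev q u end.
Fixpoint dv (p : PE) : PE :=
  match p with PC _ => PC 0 | PX => PC 1 | PA p q => PA (dv p) (dv q)
  | PM p q => PA (PM (dv p) q) (PM p (dv q)) end.

Lemma ev_derive : forall p u, is_derive (ev p) u (ev (dv p) u).
Proof.
  induction p; intros u; simpl.
  - apply (is_derive_const c u).
  - apply (is_derive_id u).
  - apply (is_derive_plus (ev p1) (ev p2)); auto.
  - apply (is_derive_mult (ev p1) (ev p2)); auto. intros; apply Rmult_comm.
Qed.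

Lemma ev_bound : forall p, exists C k, 0 <= C /\ forall u, 0 <= u -> Rabs (ev p u) <= C * (1 + u) ^ k.
Proof.
  induction p.
  - exists (Rabs c), 0%nat. split. apply Rabs_pos. intros; simpl; lra.
  - exists 1, 1%nat. split. lra. intros u Hu; simpl. rewrite Rabs_pos_eq; lra.
  - destruct IHp1 as [C1 [k1 [H1 H1']]]. destruct IHp2 as [C2 [k2 [H2 H2']]].
    exists (C1 + C2), (Nat.max k1 k2). split. lra. intros u Hu. simpl.
    eapply Rle_trans. apply Rabs_triang.
    assert (A1 : (1+u)^k1 <= (1+u)^(Nat.max k1 k2)) by (apply Rle_pow; [lra|lia]).
    assert (A2 : (1+u)^k2 <= (1+u)^(Nat.max k1 k2)) by (apply Rle_pow; [lra|lia]).
    specialize (H1' u Hu). specialize (H2' u Hu).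
    assert (C1 * (1+u)^k1 <= C1 * (1+u)^(Nat.max k1 k2)) by (apply Rmult_le_compat_l; lra).
    assert (C2 * (1+u)^k2 <= C2 * (1+u)^(Nat.max k1 k2)) by (apply Rmult_le_compat_l; lra).
    lra.
  - destruct IHp1 as [C1 [k1 [H1 H1']]]. destruct IHp2 as [C2 [k2 [H2 H2']]].
    exists (C1 * C2), (k1 + k2)%nat. split. now apply Rmult_le_pos. intros u Hu. simpl.
    rewrite Rabs_mult, pow_add.
    replace (C1 * C2 * ((1 + u) ^ k1 * (1 + u) ^ k2)) with ((C1 * (1+u)^k1) * (C2 * (1+u)^k2)) by ring.
    apply Rmult_le_compat; auto using Rabs_pos.
Qed.

Lemma exp_pow : forall n x, exp x ^ n = exp (INR n * x).
Proof.
  induction n; intros x. simpl. now rewrite Rmult_0_l, exp_0.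
  rewrite S_INR. simpl pow. rewrite IHn. rewrite <- exp_plus. f_equal. ring.
Qed.

Lemma pow_exp_bound : forall m u, (1 <= m)%nat -> 0 <= u -> (1 + u) ^ m <= INR m ^ m * exp u.
Proof.
  intros m u Hm Hu. assert (Hm' : 1 <= INR m) by (apply (le_INR 1); lia).
  assert (E : exp u = exp (u / INR m) ^ m).
  { rewrite exp_pow. f_equal. field. lra. }
  rewrite E, <- Rpow_mult_distr. apply pow_incr. split. lra.
  pose proof (exp_ineq1_le (u / INR m)).
  assert (INR m * (1 + u / INR m) <= INR m * exp (u / INR m)) by (apply Rmult_le_compat_l; lra).
  assert (INR m * (1 + u / INR m) = INR m + u) by (field; lra). nra.
Qed.

Definition fP (p : PE) (x : R) : R := if Rlt_dec 0 x then ev p (/ x) * exp (- / x) else 0.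
Definition nxt (p : PE) : PE := PM (PM PX PX) (PA p (PM (PC (-1)) (dv p))).

Lemma fP_derive_pos : forall p x, 0 < x -> is_derive (fP p) x (fP (nxt p) x).
Proof.
  intros p x Hx. apply (is_derive_ext_loc (fun y => ev p (/ y) * exp (- / y))).
  - exists (mkposreal x Hx). intros y Hy.
    unfold ball in Hy; simpl in Hy; unfold AbsRing_ball, abs, minus, plus, opp in Hy; simpl in Hy.
    apply Rabs_lt_between in Hy. unfold fP. destruct (Rlt_dec 0 y); [reflexivity|lra].
  - assert (Hi : is_derive Rinv x (- / x ^ 2)).
    { apply (is_derive_ext (fun y => / y)); [reflexivity|]. auto_derive. lra. field. lra. }
    pose proof (is_derive_comp (ev p) Rinv x _ _ (ev_derive p (/ x)) Hi) as H1.
    assert (H2 : is_derive (fun y => exp (- / y)) x (exp (- / x) * / x ^ 2)).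
    { auto_derive. lra. field. lra. }
    pose proof (is_derive_mult _ _ x _ _ H1 H2 (fun a b => Rmult_comm a b)) as HD.
    assert (Eq : fP (nxt p) x = plus (mult (scal (- / x ^ 2) (ev (dv p) (/ x))) (exp (- / x)))
       (mult (ev p (/ x)) (exp (- / x) * / x ^ 2))).
    { unfold fP. destruct (Rlt_dec 0 x); [|lra]. simpl. unfold scal, mult, plus; simpl.
      unfold mult; simpl. field. lra. }
    rewrite Eq. exact HD.
Qed.

Lemma fP_derive_neg : forall p x, x < 0 -> is_derive (fP p) x (fP (nxt p) x).
Proof.
  intros p x Hx. apply (is_derive_ext_loc (fun _ => 0)).
  - assert (Hx' : 0 < - x) by lra. exists (mkposreal (-x) Hx'). intros y Hy.
    unfold ball in Hy; simpl in Hy; unfold AbsRing_ball, abs, minus, plus, opp in Hy; simpl in Hy.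
    apply Rabs_lt_between in Hy. unfold fP. destruct (Rlt_dec 0 y); [lra|reflexivity].
  - replace (fP (nxt p) x) with 0 by (unfold fP; destruct (Rlt_dec 0 x); [lra|reflexivity]). apply (is_derive_const 0 x).
Qed.

Lemma fP_derive_0 : forall p, is_derive (fP p) 0 (fP (nxt p) 0).
Proof.
  intros p. replace (fP (nxt p) 0) with 0 by (unfold fP; destruct (Rlt_dec 0 0); [lra|reflexivity]).
  apply is_derive_Reals. intros eps Heps.
  destruct (ev_bound p) as [C [k [HC Hb]]].
  set (m := S (S k)). set (K := C * INR m ^ m).
  assert (HK : 0 <= K) by (unfold K; apply Rmult_le_pos; auto; apply pow_le; apply pos_INR).
  assert (Hd : 0 < eps / (K + 1)) by (apply Rdiv_lt_0_compat; lra).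
  exists (mkposreal _ Hd). intros h Hh0 Hh. simpl in Hh.
  replace (0 + h) with h by ring.
  unfold fP. destruct (Rlt_dec 0 0); [lra|]. destruct (Rlt_dec 0 h) as [Hp|Hn].
  - set (u := / h). assert (Hu : 0 < u) by (apply Rinv_0_lt_compat; auto).
    assert (Hhu : h = / u) by (unfold u; rewrite Rinv_inv; auto).
    rewrite Rabs_pos_eq in Hh by lra.
    specialize (Hb u (Rlt_le _ _ Hu)).
    assert (Hm : (1 + u) ^ m <= INR m ^ m * exp u) by (apply pow_exp_bound; [unfold m; lia|lra]).
    assert (Hexp : exp (- u) * exp u = 1) by (rewrite <- exp_plus; replace (-u+u) with 0 by ring; apply exp_0).
    assert (He : 0 < exp (-u)) by apply exp_pos.
    replace ((ev p u * exp (- u) - 0) / h - 0) with (u * ev p u * exp (- u)) by (rewrite Hhu; field; lra).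
    rewrite Rabs_mult, Rabs_mult, (Rabs_pos_eq u) by lra. rewrite (Rabs_pos_eq (exp (-u))) by lra.
    (* u * |ev| * e^-u <= u*C*(1+u)^k e^-u <= C (1+u)^(k+2) e^-u / u <= C m^m / u = K h *)
    assert (H1 : u * Rabs (ev p u) * exp (- u) <= C * (1+u)^m * exp (-u) * h).
    { unfold m. simpl pow. rewrite Hhu.
      assert (Hp1 : 0 <= (1+u)^k) by (apply pow_le; lra).
      assert (u * Rabs (ev p u) <= u * (C * (1+u)^k)) by (apply Rmult_le_compat_l; lra).
      assert (u * (C * (1+u)^k) * exp (-u) <= C * ((1 + u) * ((1 + u) * (1 + u) ^ k)) * exp (- u) * / u).
      { apply Rmult_le_reg_r with u; auto.
        replace (C * ((1 + u) * ((1 + u) * (1 + u) ^ k)) * exp (- u) * / u * u)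
          with (C * ((1 + u) * ((1 + u) * (1 + u) ^ k)) * exp (- u)) by (field; lra).
        assert (0 <= C * (1+u)^k * exp (-u)) by (apply Rmult_le_pos; [apply Rmult_le_pos|]; lra).
        nra. }
      assert (u * Rabs (ev p u) * exp (-u) <= u * (C * (1+u)^k) * exp (-u)) by (apply Rmult_le_compat_r; lra).
      lra. }
    assert (H2 : C * (1+u)^m * exp (-u) <= K).
    { unfold K. assert (C * (1+u)^m <= C * (INR m ^ m * exp u)) by (apply Rmult_le_compat_l; lra).
      assert (C * (1 + u) ^ m * exp (- u) <= C * (INR m ^ m * exp u) * exp (-u)) by (apply Rmult_le_compat_r; lra).
      replace (C * (INR m ^ m * exp u) * exp (- u)) with (C * INR m ^ m * (exp (-u) * exp u)) in H0 by ring.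
      rewrite Hexp in H0. lra. }
    assert (H3 : C * (1+u)^m * exp (-u) * h <= K * h) by (apply Rmult_le_compat_r; lra).
    assert (H4 : K * h < eps).
    { assert (h * (K + 1) < eps) by (apply (Rmult_lt_compat_r (K+1)) in Hh; [|lra]; field_simplify in Hh; lra).
      nra. }
    lra.
  - replace ((0 - 0) / h - 0) with 0 by (field; auto). rewrite Rabs_R0. lra.
Qed.

Lemma fP_derive : forall p x, is_derive (fP p) x (fP (nxt p) x).
Proof.
  intros p x. destruct (Rtotal_order x 0) as [H|[H|H]].
  - now apply fP_derive_neg.
  - subst. apply fP_derive_0.
  - now apply fP_derive_pos.
Qed.

Fixpoint Pn (n : nat) : PE := match n with O => PC 1 | S n => nxt (Pn n) end.
Definition Eb : R -> R := fP (PC 1).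

Lemma Derive_n_Eb : forall n, Derive_n Eb n = fP (Pn n).
Proof.
  induction n.
  - reflexivity.
  - apply functional_extensionality; intro x. simpl. rewrite IHn.
    apply is_derive_unique. apply fP_derive.
Qed.

Lemma Eb_sm1 : sm1 Eb.
Proof. intros k x. rewrite Derive_n_Eb. eexists. apply fP_derive. Qed.

Lemma Eb_pos : forall x, 0 < x -> 0 < Eb x.
Proof. intros x Hx. unfold Eb, fP. destruct (Rlt_dec 0 x); [|lra]. simpl. rewrite Rmult_1_l. apply exp_pos. Qed.
Lemma Eb_zero : forall x, x <= 0 -> Eb x = 0.
Proof. intros x Hx. unfold Eb, fP. destruct (Rlt_dec 0 x); [lra|reflexivity]. Qed.
Lemma Eb_nonneg : forall x, 0 <= Eb x.
Proof. intros x. destruct (Rle_lt_dec x 0). rewrite Eb_zero; lra. apply Rlt_le, Eb_pos; auto. Qed.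
Lemma DEb_zero : forall x, x <= 0 -> Derive Eb x = 0.
Proof. intros x Hx. change (Derive Eb x) with (Derive_n Eb 1 x). rewrite Derive_n_Eb.
  unfold fP. destruct (Rlt_dec 0 x); [lra|reflexivity]. Qed.

Lemma sqrt_pos_inv : forall x, 0 < sqrt x -> 0 < x.
Proof.
  intros x H. destruct (Rle_lt_dec x 0); auto. rewrite sqrt_neg_0 in H; lra.
Qed.

Lemma ball_between : forall x y (e : posreal), ball x e y -> x - e < y < x + e.
Proof.
  intros x y e H. unfold ball in H; simpl in H; unfold AbsRing_ball, abs, minus, plus, opp in H; simpl in H.
  apply Rabs_lt_between in H. lra.
Qed.

Lemma Derive_interior : forall f h a b x, (forall s, a < s < b -> f s = h s) -> a < x < b ->
  Derive f x = Derive h x.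
Proof.
  intros f h a b x H Hx. apply Derive_ext_loc.
  assert (Hd : 0 < Rmin (x - a) (b - x)) by (apply Rmin_glb_lt; lra).
  exists (mkposreal _ Hd). intros y Hy. apply ball_between in Hy. simpl in Hy.
  pose proof (Rmin_l (x-a) (b-x)). pose proof (Rmin_r (x-a) (b-x)). apply H. lra.
Qed.

Lemma Derive_loc_const : forall f c d x, 0 < d -> (forall t, Rabs (t - x) <= d -> f t = c) -> Derive f x = 0.
Proof.
  intros f c d x Hd H. rewrite (Derive_ext_loc f (fun _ => c)). apply Derive_const.
  exists (mkposreal d Hd). intros y Hy. apply ball_between in Hy. simpl in Hy. apply H.
  apply Rabs_le_between. lra.
Qed.

Lemma sm1_cont : forall f x, sm1 f -> continuity_pt f x.
Proof. intros f x H. apply cont_of_ex_derive. apply (H 0%nat). Qed.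
Lemma sm1_cont_D : forall f x, sm1 f -> continuity_pt (Derive f) x.
Proof. intros f x H. apply cont_of_ex_derive. apply (H 1%nat). Qed.
Lemma sm1_continuous : forall f x, sm1 f -> continuous f x.
Proof. intros f x H. apply continuity_pt_filterlim. now apply sm1_cont. Qed.
Lemma sm1_continuous_D : forall f x, sm1 f -> continuous (Derive f) x.
Proof. intros f x H. apply continuity_pt_filterlim. now apply sm1_cont_D. Qed.

Lemma sm1_ex_RInt : forall f a b, sm1 f -> ex_RInt f a b.
Proof. intros f a b H. apply (@ex_RInt_continuous R_CompleteNormedModule). intros; now apply sm1_continuous. Qed.

Lemma RInt_pos_pt : forall f a b c, a < c < b -> (forall x, continuous f x) ->
  (forall x, a < x < b -> 0 <= f x) -> 0 < f c -> 0 < RInt f a b.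
Proof.
  intros f a b c Hc Hcont Hnn Hpos.
  assert (Hcp : continuity_pt f c) by (apply continuity_pt_filterlim; apply Hcont).
  rewrite continuity_pt_locally in Hcp. destruct (Hcp (mkposreal (f c / 2) ltac:(lra))) as [e He].
  set (a' := Rmax a (c - e/2)). set (b' := Rmin b (c + e/2)).
  assert (Hep := cond_pos e).
  assert (Ha' : a <= a' < c) by (unfold a'; split; [apply Rmax_l| apply Rmax_lub_lt; lra]).
  assert (Hb' : c < b' <= b) by (unfold b'; split; [apply Rmin_glb_lt; lra| apply Rmin_l]).
  assert (Hex : forall u v, ex_RInt f u v) by (intros; apply (@ex_RInt_continuous R_CompleteNormedModule); auto).
  rewrite <- (RInt_Chasles f a a' b) by auto. rewrite <- (RInt_Chasles f a' b' b) by auto.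
  assert (H1 : 0 <= RInt f a a') by (apply RInt_ge_0; auto; [lra| intros; apply Hnn; lra]).
  assert (H3 : 0 <= RInt f b' b) by (apply RInt_ge_0; auto; [lra| intros; apply Hnn; lra]).
  assert (H2 : 0 < RInt f a' b').
  { apply RInt_gt_0; [lra| |intros; auto].
    intros x Hx. specialize (He x).
    assert (Hb : ball c e x).
    { unfold ball; simpl; unfold AbsRing_ball, abs, minus, plus, opp; simpl.
      apply Rabs_lt_between. unfold a', b' in Hx.
      pose proof (Rmax_r a (c - e/2)). pose proof (Rmin_r b (c + e/2)). lra. }
    specialize (He Hb). simpl in He. apply Rabs_lt_between in He. lra. }
  simpl. unfold plus; simpl. lra.
Qed.

Lemma choose_s0 : forall x0 L g, 0 < L -> admissible x0 L g ->
  exists s0, L/2 < s0 < 3*L/2 /\ Derive (cy g) s0 <> 0.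
Proof.
  intros x0 L g HL Hg. destruct (classic (exists s0, L/2 < s0 < 3*L/2 /\ Derive (cy g) s0 <> 0)) as [H|H]; auto.
  exfalso. assert (H0 : forall s, L/2 < s < 3*L/2 -> Derive (cy g) s = 0).
  { intros s Hs. destruct (Req_dec (Derive (cy g) s) 0); auto. exfalso; apply H; eauto. }
  assert (H1 : Derive (Derive (cy g)) L = 0).
  { apply (Derive_loc_const _ 0 (L/4)). lra. intros t Ht. apply Rabs_le_between in Ht. apply H0. lra. }
  destruct Hg as [_ [_ [_ [Hc _]]]]. specialize (Hc L ltac:(lra)).
  unfold curvature, dot, perp, vel, acc in Hc. simpl in Hc.
  replace (Derive (fun x : R => Derive (fun x0 : R => cy g x0) x) L) with 0 in Hc by (rewrite <- H1; reflexivity).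
  rewrite (H0 L ltac:(lra)) in Hc.
  replace (Derive (cx g) L * 0 + 0 * - Derive (fun x : R => Derive (fun x0 : R => cx g x0) x) L) with 0 in Hc by ring.
  unfold Rdiv in Hc. rewrite Rmult_0_l in Hc. lra.
Qed.

Lemma pair_eq : forall (p q : R * R), fst p = fst q -> snd p = snd q -> p = q.
Proof. intros [] [] H1 H2; simpl in *; now subst. Qed.

Lemma choose_bump : forall x0 L g, 0 < L -> admissible x0 L g ->
  exists s0 eta c R2, L/2 < s0 - eta /\ s0 + eta < 3*L/2 /\ 0 < eta /\ 0 < R2 /\
   (forall s, Rabs (s - s0) < eta -> 0 < c * Derive (cy g) s) /\
   (forall s, 0 <= s <= 2*L -> eta <= Rabs (s - s0) ->
       R2 <= (cx g s - cx g s0)^2 + (cy g s - cy g s0)^2).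
Proof.
  intros x0 L g HL Hg. destruct (choose_s0 x0 L g HL Hg) as [s0 [Hs0 Hc0]].
  pose proof Hg as Hg'. destruct Hg' as [Hx [Hy [_ [_ [Hinj _]]]]].
  apply smooth1_sm1 in Hx. apply smooth1_sm1 in Hy.
  set (c := Derive (cy g) s0).
  assert (Hcont : continuity_pt (fun s => c * Derive (cy g) s) s0).
  { apply continuity_pt_mult. apply continuity_pt_const. intros ? ?; reflexivity. now apply sm1_cont_D. }
  rewrite continuity_pt_locally in Hcont.
  assert (Hcc : 0 < c * c) by (apply Rsqr_pos_lt; exact Hc0).
  destruct (Hcont (mkposreal (c*c/2) ltac:(lra))) as [e He].
  set (eta := Rmin (e/2) (Rmin ((s0 - L/2)/2) ((3*L/2 - s0)/2))).
  assert (Hep := cond_pos e).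
  assert (He1 : eta <= e/2) by apply Rmin_l.
  assert (He2 : eta <= (s0 - L/2)/2) by (eapply Rle_trans; [apply Rmin_r|apply Rmin_l]).
  assert (He3 : eta <= (3*L/2 - s0)/2) by (eapply Rle_trans; [apply Rmin_r|apply Rmin_r]).
  assert (Heta : 0 < eta) by (apply Rmin_glb_lt; [lra|apply Rmin_glb_lt; lra]).
  set (D := fun s => (cx g s - cx g s0)^2 + (cy g s - cy g s0)^2).
  assert (HD : forall s, continuity_pt D s).
  { intros s. assert (Ha : continuity_pt (fun s => cx g s - cx g s0) s)
      by (apply continuity_pt_minus; [now apply sm1_cont| apply continuity_pt_const; intros ? ?; reflexivity]).
    assert (Hb : continuity_pt (fun s => cy g s - cy g s0) s)
      by (apply continuity_pt_minus; [now apply sm1_cont| apply continuity_pt_const; intros ? ?; reflexivity]).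
    apply (continuity_pt_ext (fun s => (cx g s - cx g s0) * (cx g s - cx g s0) + (cy g s - cy g s0) * (cy g s - cy g s0))).
    intros; unfold D; ring.
    apply continuity_pt_plus; apply continuity_pt_mult; auto. }
  assert (HDp : forall s, 0 <= s <= 2*L -> s <> s0 -> 0 < D s).
  { intros s Hs Hne. unfold D. destruct (Req_dec (cx g s - cx g s0) 0) as [E1|E1].
    - destruct (Req_dec (cy g s - cy g s0) 0) as [E2|E2].
      + exfalso. apply Hne. apply Hinj; [exact Hs| lra| apply pair_eq; unfold cx, cy in *; lra].
      + assert (0 < (cy g s - cy g s0)^2) by (simpl; rewrite Rmult_1_r; apply Rsqr_pos_lt; auto).
        assert (0 <= (cx g s - cx g s0)^2) by (apply pow2_ge_0). lra.
    - assert (0 < (cx g s - cx g s0)^2) by (simpl; rewrite Rmult_1_r; apply Rsqr_pos_lt; auto).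
      assert (0 <= (cy g s - cy g s0)^2) by (apply pow2_ge_0). lra. }
  destruct (continuity_ab_min D 0 (s0 - eta) ltac:(lra) (fun c _ => HD c)) as [p1 [Hp1 Hp1r]].
  destruct (continuity_ab_min D (s0 + eta) (2*L) ltac:(lra) (fun c _ => HD c)) as [p2 [Hp2 Hp2r]].
  assert (HD1 : 0 < D p1) by (apply HDp; lra).
  assert (HD2 : 0 < D p2) by (apply HDp; lra).
  exists s0, eta, c, (Rmin (D p1) (D p2)). repeat split; try lra.
  - apply Rmin_glb_lt; auto.
  - intros s Hs. assert (Hb : ball s0 e s).
    { unfold ball; simpl; unfold AbsRing_ball, abs, minus, plus, opp; simpl. replace (s + - s0) with (s - s0) by ring. lra. }
    specialize (He s Hb). simpl in He. apply Rabs_lt_between in He. fold c in He. lra.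
  - intros s Hs Hd. fold (D s). destruct (Rle_lt_dec s s0).
    + rewrite Rabs_left1 in Hd by lra. eapply Rle_trans. apply Rmin_l. apply Hp1. lra.
    + rewrite Rabs_right in Hd by lra. eapply Rle_trans. apply Rmin_r. apply Hp2. lra.
Qed.

Lemma smooth2_ext : forall F G, (forall s t, F s t = G s t) -> smooth2 F -> smooth2 G.
Proof.
  intros F G E H. replace G with F; auto.
  apply functional_extensionality; intro s; apply functional_extensionality; intro t; auto.
Qed.

Lemma smooth2_minus : forall F G, smooth2 F -> smooth2 G -> smooth2 (fun s t => F s t - G s t).
Proof.
  intros F G HF HG. apply (smooth2_ext (fun s t => F s t + (-1) * G s t)).
  intros; ring. apply smooth2_plus; auto. apply smooth2_mult; auto. apply smooth2_const.
Qed.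

Lemma smooth2_sq : forall F, smooth2 F -> smooth2 (fun s t => (F s t)^2).
Proof. intros F H. apply (smooth2_ext (fun s t => F s t * F s t)). intros; ring. now apply smooth2_mult. Qed.

Lemma smooth2_scal : forall c F, smooth2 F -> smooth2 (fun s t => c * F s t).
Proof. intros c F H. apply smooth2_mult; auto. apply smooth2_const. Qed.

Lemma smooth2_cont : forall F s t, smooth2 F -> continuity_2d_pt F s t.
Proof. intros F s t H. apply (smooth2_cond0 F H s t). Qed.
Lemma smooth2_exs : forall F s t, smooth2 F -> ex_derive (fun u => F u t) s.
Proof. intros F s t H. apply (smooth2_cond0 F H s t). Qed.
Lemma smooth2_ext_t : forall F s t, smooth2 F -> ex_derive (fun u => F s u) t.
Proof. intros F s t H. apply (smooth2_cond0 F H s t). Qed.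

Lemma smooth2_ex_RInt : forall F a b t, smooth2 F -> ex_RInt (fun s => F s t) a b.
Proof. intros. apply ex_RInt_slice. now apply smooth2_cond0. Qed.

Definition AreaF (V1 V2 : R -> R -> R) (L t : R) : R :=
  / 2 * RInt (fun s => V1 s t * pd true V2 s t - pd true V1 s t * V2 s t) 0 (2 * L).

Lemma area_AreaF : forall V L t, area L (curve_at V t) = AreaF (fun s t => fst (V s t)) (fun s t => snd (V s t)) L t.
Proof. intros. reflexivity. Qed.

Definition Vt_of (V1 V2 : R -> R -> R) (lam : R -> R) (w : R -> R -> R) : R -> R -> R * R :=
  fun s t => (V1 s t + lam t * w s t, V2 s t).

Lemma area_decomp : forall V1 V2 lam w L t, smooth2 V1 -> smooth2 V2 -> smooth2 w ->
  area L (curve_at (Vt_of V1 V2 lam w) t) = AreaF V1 V2 L t + lam t * AreaF w V2 L t.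
Proof.
  intros V1 V2 lam w L t H1 H2 Hw. unfold area, AreaF, curve_at, Vt_of, cx, cy. simpl.
  assert (E : forall s, Derive (fun s0 => V1 s0 t + lam t * w s0 t) s = pd true V1 s t + lam t * pd true w s t).
  { intros s. rewrite Derive_plus. rewrite Derive_scal. reflexivity.
    apply smooth2_exs; auto. apply ex_derive_scal. apply smooth2_exs; auto. }
  rewrite (RInt_ext _ (fun s => (V1 s t * pd true V2 s t - pd true V1 s t * V2 s t)
       + lam t * (w s t * pd true V2 s t - pd true w s t * V2 s t))).
  2: { intros s _. rewrite E. simpl. ring. }
  rewrite (RInt_plus (V := R_CompleteNormedModule)).
  rewrite (RInt_scal (V := R_CompleteNormedModule)).
  - unfold plus, scal; simpl. unfold mult; simpl. ring.
  - apply (smooth2_ex_RInt (fun s t => w s t * pd true V2 s t - pd true w s t * V2 s t)).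
    apply smooth2_minus; apply smooth2_mult; auto using smooth2_pd.
  - apply (smooth2_ex_RInt (fun s t => V1 s t * pd true V2 s t - pd true V1 s t * V2 s t)).
    apply smooth2_minus; apply smooth2_mult; auto using smooth2_pd.
  - apply (ex_RInt_scal (V := R_CompleteNormedModule) (fun s => (w s t * pd true V2 s t - pd true w s t * V2 s t))).
    apply (smooth2_ex_RInt (fun s t => w s t * pd true V2 s t - pd true w s t * V2 s t)).
    apply smooth2_minus; apply smooth2_mult; auto using smooth2_pd.
Qed.

Lemma schwarz_pd : forall F s t, smooth2 F -> pd false (pd true F) s t = pd true (pd false F) s t.
Proof.
  intros F s t H. symmetry. unfold pd at 1 3. simpl.
  apply (Schwarz F s t).
  - exists (mkposreal 1 Rlt_0_1). intros u v _ _. repeat split.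
    + apply smooth2_exs; auto.
    + apply smooth2_ext_t; auto.
    + apply (smooth2_exs (pd false F)). now apply smooth2_pd.
    + apply (smooth2_ext_t (pd true F)). now apply smooth2_pd.
  - apply (smooth2_cont (pd true (pd false F))). repeat apply smooth2_pd; auto.
  - apply (smooth2_cont (pd false (pd true F))). repeat apply smooth2_pd; auto.
Qed.

Lemma AreaF_is_Iab : forall V1 V2 L, AreaF V1 V2 L =
  fun t => / 2 * Iab (fun s t => V1 s t * pd true V2 s t - pd true V1 s t * V2 s t) 0 (2 * L) t.
Proof. reflexivity. Qed.

Lemma AreaF_sm1 : forall V1 V2 L, smooth2 V1 -> smooth2 V2 -> sm1 (AreaF V1 V2 L).
Proof.
  intros V1 V2 L H1 H2. rewrite AreaF_is_Iab.
  apply (smooth2_slice_t (fun s t => / 2 * Iab (fun s t => V1 s t * pd true V2 s t - pd true V1 s t * V2 s t) 0 (2 * L) t) 0).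
  apply smooth2_scal. apply smooth2_ft. apply Iab_sm1.
  apply smooth2_minus; apply smooth2_mult; auto using smooth2_pd.
Qed.

Lemma pd_mm : forall b F G H K s t, smooth2 F -> smooth2 G -> smooth2 H -> smooth2 K ->
  pd b (fun s t => F s t * G s t - H s t * K s t) s t =
  pd b F s t * G s t + F s t * pd b G s t - (pd b H s t * K s t + H s t * pd b K s t).
Proof.
  intros b F G H K s t HF HG HH HK. destruct b; simpl.
  - pose proof (smooth2_exs F s t HF). pose proof (smooth2_exs G s t HG).
    pose proof (smooth2_exs H s t HH). pose proof (smooth2_exs K s t HK).
    rewrite (Derive_minus (fun u => F u t * G u t) (fun u => H u t * K u t)).
    rewrite (Derive_mult (fun u => F u t) (fun u => G u t)) by assumption.
    rewrite (Derive_mult (fun u => H u t) (fun u => K u t)) by assumption. reflexivity.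
    now apply (ex_derive_mult (fun u => F u t) (fun u => G u t)).
    now apply (ex_derive_mult (fun u => H u t) (fun u => K u t)).
  - pose proof (smooth2_ext_t F s t HF). pose proof (smooth2_ext_t G s t HG).
    pose proof (smooth2_ext_t H s t HH). pose proof (smooth2_ext_t K s t HK).
    rewrite (Derive_minus (fun u => F s u * G s u) (fun u => H s u * K s u)).
    rewrite (Derive_mult (fun u => F s u) (fun u => G s u)) by assumption.
    rewrite (Derive_mult (fun u => H s u) (fun u => K s u)) by assumption. reflexivity.
    now apply (ex_derive_mult (fun u => F s u) (fun u => G s u)).
    now apply (ex_derive_mult (fun u => H s u) (fun u => K s u)).
Qed.

Lemma AreaF_deriv0 : forall x0 L g V tV, 0 < L -> 0 < tV ->
  smooth2 (fun s t => fst (V s t)) -> smooth2 (fun s t => snd (V s t)) ->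
  (forall t, Rabs t <= tV -> V 0 t = (x0, 0) /\ V (2 * L) t = (- x0, 0)) ->
  (forall s, 0 <= s <= 2 * L -> V s 0 = g s) ->
  arclength_param L g -> first_order_area_preserving L g V ->
  Derive (AreaF (fun s t => fst (V s t)) (fun s t => snd (V s t)) L) 0 = 0.
Proof.
  intros x0 L g V tV HL HtV H1 H2 Hend Hg Harc Hfo.
  set (V1 := fun s t => fst (V s t)) in *. set (V2 := fun s t => snd (V s t)) in *.
  set (FA := fun s t => V1 s t * pd true V2 s t - pd true V1 s t * V2 s t).
  assert (HFA : smooth2 FA) by (apply smooth2_minus; apply smooth2_mult; auto using smooth2_pd).
  rewrite AreaF_is_Iab. fold FA.
  rewrite Derive_scal. rewrite Iab_Derive by auto. unfold Iab.
  set (G := fun s t => V1 s t * pd false V2 s t - pd false V1 s t * V2 s t).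
  assert (HG : smooth2 G) by (apply smooth2_minus; apply smooth2_mult; auto using smooth2_pd).
  set (H := fun s => pd false V1 s 0 * pd true V2 s 0 - pd true V1 s 0 * pd false V2 s 0).
  assert (HH : smooth2 (fun s t => pd false V1 s t * pd true V2 s t - pd true V1 s t * pd false V2 s t))
    by (apply smooth2_minus; apply smooth2_mult; auto using smooth2_pd).
  rewrite (RInt_ext _ (fun s => 2 * H s + pd true G s 0)).
  2: { intros s _. unfold FA, G, H.
       rewrite pd_mm by auto using smooth2_pd. rewrite pd_mm by auto using smooth2_pd.
       rewrite (schwarz_pd V1 s 0 H1), (schwarz_pd V2 s 0 H2). match goal with |- ?a = ?b => change (@eq R a b) end; ring. }
  assert (HexH : ex_RInt H 0 (2 * L)) by exact (smooth2_ex_RInt _ 0 (2 * L) 0 HH).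
  assert (HexG : ex_RInt (fun s => pd true G s 0) 0 (2 * L))
    by exact (smooth2_ex_RInt _ 0 (2 * L) 0 (smooth2_pd true G HG)).
  rewrite (RInt_plus (V := R_CompleteNormedModule) (fun s => 2 * H s)).
  2: apply (ex_RInt_scal (V := R_CompleteNormedModule)); exact HexH.
  2: exact HexG.
  rewrite (RInt_scal (V := R_CompleteNormedModule) H) by exact HexH.
  assert (EG : RInt (fun s => pd true G s 0) 0 (2 * L) = G (2 * L) 0 - G 0 0).
  { change (RInt (Derive (fun s => G s 0)) 0 (2 * L) = G (2 * L) 0 - G 0 0).
    apply (RInt_Derive (fun s => G s 0)).
    - intros x _. exact (smooth2_exs G x 0 HG).
    - intros x _. apply (@ex_derive_continuous R_AbsRing R_NormedModule).
      exact (smooth2_exs (pd true G) x 0 (smooth2_pd true G HG)). }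
  assert (Ez : forall s, (s = 0 \/ s = 2 * L) -> pd false V1 s 0 = 0 /\ pd false V2 s 0 = 0).
  { intros s Hs. split.
    - apply (Derive_loc_const _ (if Req_EM_T s 0 then x0 else - x0) tV); auto.
      intros t Ht. rewrite Rminus_0_r in Ht. destruct (Hend t Ht) as [E0 E2].
      destruct Hs as [-> | ->]; unfold V1.
      + destruct (Req_EM_T 0 0); [|lra]. now rewrite E0.
      + destruct (Req_EM_T (2 * L) 0); [lra|]. now rewrite E2.
    - apply (Derive_loc_const _ 0 tV); auto.
      intros t Ht. rewrite Rminus_0_r in Ht. destruct (Hend t Ht) as [E0 E2].
      destruct Hs as [-> | ->]; unfold V2; [now rewrite E0| now rewrite E2]. }
  assert (EG0 : G 0 0 = 0).
  { unfold G. destruct (Ez 0 (or_introl eq_refl)) as [A B]. rewrite A, B. ring. }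
  assert (EG2 : G (2 * L) 0 = 0).
  { unfold G. destruct (Ez (2 * L) (or_intror eq_refl)) as [A B]. rewrite A, B. ring. }
  assert (EH : RInt H 0 (2 * L) = 0).
  { unfold first_order_area_preserving in Hfo. etransitivity; [|exact Hfo]. apply RInt_ext.
    rewrite Rmin_left, Rmax_right by lra. intros s Hs.
    assert (D1 : pd true V1 s 0 = Derive (cx g) s).
    { apply (Derive_interior _ _ 0 (2 * L)); auto. intros u Hu. unfold V1, cx. rewrite Hg; auto; lra. }
    assert (D2 : pd true V2 s 0 = Derive (cy g) s).
    { apply (Derive_interior _ _ 0 (2 * L)); auto. intros u Hu. unfold V2, cy. rewrite Hg; auto; lra. }
    unfold H. rewrite D1, D2. unfold normal. rewrite (Harc s ltac:(lra)).
    unfold dot, var_velocity, perp, vel. simpl.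
    unfold V1, V2, pd. simpl. field. }
  rewrite EG, EG0, EG2, EH. unfold scal; simpl. unfold mult, plus; simpl. ring.
Qed.

Definition bumpw (V1 V2 : R -> R -> R) (a b R2 : R) : R -> R -> R :=
  fun s t => Eb (R2 - ((V1 s t - a)^2 + (V2 s t - b)^2)).

Lemma smooth2_bumpw : forall V1 V2 a b R2, smooth2 V1 -> smooth2 V2 -> smooth2 (bumpw V1 V2 a b R2).
Proof.
  intros V1 V2 a b R2 H1 H2. unfold bumpw.
  apply (smooth2_comp (fun _ => True) Eb (fun s t => R2 - ((V1 s t - a)^2 + (V2 s t - b)^2))).
  - apply sm1_on, Eb_sm1.
  - auto.
  - apply smooth2_minus. apply smooth2_const. apply smooth2_plus; apply smooth2_sq; apply smooth2_minus; auto; apply smooth2_const.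
Qed.

Lemma B0_nonzero : forall x0 L g V1 V2 s0 eta c R2, 0 < L -> admissible x0 L g ->
  smooth2 V1 -> smooth2 V2 ->
  (forall s, 0 <= s <= 2 * L -> V1 s 0 = cx g s /\ V2 s 0 = cy g s) ->
  L/2 < s0 - eta -> s0 + eta < 3*L/2 -> 0 < eta -> 0 < R2 ->
  (forall s, Rabs (s - s0) < eta -> 0 < c * Derive (cy g) s) ->
  (forall s, 0 <= s <= 2*L -> eta <= Rabs (s - s0) ->
       R2 <= (cx g s - cx g s0)^2 + (cy g s - cy g s0)^2) ->
  AreaF (bumpw V1 V2 (cx g s0) (cy g s0) R2) V2 L 0 <> 0.
Proof.
  intros x0 L g V1 V2 s0 eta c R2 HL Hg H1 H2 HV Hs1 Hs2 Heta HR2 Hc HD.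
  set (a := cx g s0). set (b := cy g s0). set (w := bumpw V1 V2 a b R2).
  assert (Hw : smooth2 w) by (apply smooth2_bumpw; auto).
  set (W := fun s => w s 0). set (Y := fun s => V2 s 0).
  assert (HW : sm1 W) by (apply smooth2_slice_s; auto).
  assert (HY : sm1 Y) by (apply smooth2_slice_s; auto).
  assert (Wz : forall s, 0 <= s <= 2 * L -> eta <= Rabs (s - s0) -> W s = 0).
  { intros s Hs Hd. unfold W, w, bumpw. destruct (HV s Hs) as [E1 E2]. rewrite E1, E2.
    apply Eb_zero. specialize (HD s Hs Hd). fold a b in HD. lra. }
  assert (Wnn : forall s, 0 <= W s) by (intros; apply Eb_nonneg).
  assert (W0 : W 0 = 0) by (apply Wz; [lra| rewrite Rabs_left1; lra]).
  assert (W2 : W (2 * L) = 0) by (apply Wz; [lra| rewrite Rabs_right; lra]).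
  assert (Ws0 : 0 < W s0).
  { unfold W, w, bumpw. destruct (HV s0 ltac:(lra)) as [E1 E2]. rewrite E1, E2. fold a b.
    apply Eb_pos. replace ((a - a)^2 + (b - b)^2) with 0 by ring. lra. }
  unfold AreaF. fold w.
  change (/ 2 * RInt (fun s => W s * Derive Y s - Derive W s * Y s) 0 (2 * L) <> 0).
  assert (HexA : ex_RInt (fun s => W s * Derive Y s) 0 (2 * L)).
  { apply (@ex_RInt_continuous R_CompleteNormedModule). intros z _.
    apply (continuous_mult (K := R_AbsRing)). now apply sm1_continuous. now apply sm1_continuous_D. }
  assert (HexB : ex_RInt (fun s => Derive W s * Y s) 0 (2 * L)).
  { apply (@ex_RInt_continuous R_CompleteNormedModule). intros z _.
    apply (continuous_mult (K := R_AbsRing)). now apply sm1_continuous_D. now apply sm1_continuous. }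
  assert (Hparts : RInt (fun s => Derive W s * Y s) 0 (2 * L) = - RInt (fun s => W s * Derive Y s) 0 (2 * L)).
  { assert (E : RInt (Derive (fun s => W s * Y s)) 0 (2 * L) = W (2 * L) * Y (2 * L) - W 0 * Y 0).
    { apply (RInt_Derive (fun s => W s * Y s)).
      - intros x _. apply ex_derive_mult; apply (HW 0%nat) || apply (HY 0%nat).
      - intros x _.
        assert (EE : Derive (fun s => W s * Y s) = fun s => Derive W s * Y s + W s * Derive Y s).
        { apply functional_extensionality; intro z. apply Derive_mult. apply (HW 0%nat). apply (HY 0%nat). }
        rewrite EE. apply (continuous_plus (K := R_AbsRing) (V := R_NormedModule) (fun s => Derive W s * Y s)).
        + apply (continuous_mult (K := R_AbsRing)). now apply sm1_continuous_D. now apply sm1_continuous.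
        + apply (continuous_mult (K := R_AbsRing)). now apply sm1_continuous. now apply sm1_continuous_D. }
    rewrite W0, W2 in E.
    rewrite (RInt_ext _ (fun s => Derive W s * Y s + W s * Derive Y s)) in E.
    2: { intros x _. rewrite Derive_mult. reflexivity. apply (HW 0%nat). apply (HY 0%nat). }
    rewrite (RInt_plus (V := R_CompleteNormedModule)) in E by auto.
    unfold plus in E; simpl in E. lra. }
  rewrite (RInt_minus (V := R_CompleteNormedModule)) by auto. rewrite Hparts.
  unfold minus, plus, opp; simpl.
  assert (Hpos : 0 < RInt (fun s => c * (W s * Derive Y s)) 0 (2 * L)).
  { apply (RInt_pos_pt _ 0 (2 * L) s0). lra.
    - intros x. apply (continuous_mult (K := R_AbsRing)). apply continuous_const.
      apply (continuous_mult (K := R_AbsRing)). now apply sm1_continuous. now apply sm1_continuous_D.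
    - intros x Hx. destruct (Rlt_le_dec (Rabs (x - s0)) eta) as [Hl|Hl].
      + assert (DY : Derive Y x = Derive (cy g) x).
        { apply (Derive_interior _ _ 0 (2 * L)); auto. intros u Hu. apply HV. lra. }
        rewrite DY. specialize (Hc x Hl). specialize (Wnn x).
        replace (c * (W x * Derive (cy g) x)) with (W x * (c * Derive (cy g) x)) by ring.
        apply Rmult_le_pos; lra.
      + rewrite Wz by lra. lra.
    - assert (DY : Derive Y s0 = Derive (cy g) s0).
      { apply (Derive_interior _ _ 0 (2 * L)); auto. intros u Hu. apply HV. lra. lra. }
      rewrite DY. specialize (Hc s0). rewrite Rminus_diag, Rabs_R0 in Hc. specialize (Hc Heta).
      replace (c * (W s0 * Derive (cy g) s0)) with (W s0 * (c * Derive (cy g) s0)) by ring.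
      apply Rmult_lt_0_compat; lra. }
  assert (E : RInt (fun s => c * (W s * Derive Y s)) 0 (2*L) = c * RInt (fun s => W s * Derive Y s) 0 (2*L))
    by exact (RInt_scal (V := R_CompleteNormedModule) _ _ _ _ HexA).
  rewrite E in Hpos.
  intro Hz. assert (RInt (fun s => W s * Derive Y s) 0 (2 * L) = 0) by lra.
  rewrite H in Hpos. lra.
Qed.

Definition psi (a b R2 p1 p2 : R) : R := Eb (R2 - ((p1 - a)^2 + (p2 - b)^2)).

Lemma psi_derive : forall a b R2 y x,
  is_derive (fun x => psi a b R2 x y) x (Derive Eb (R2 - ((x - a)^2 + (y - b)^2)) * (- (2 * (x - a)))).
Proof.
  intros a b R2 y x. unfold psi.
  assert (Hi : is_derive (fun x => R2 - ((x - a)^2 + (y - b)^2)) x (- (2 * (x - a)))).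
  { auto_derive. auto. ring. }
  pose proof (is_derive_comp Eb (fun x => R2 - ((x - a)^2 + (y - b)^2)) x _ _
     (Derive_correct Eb _ (Eb_sm1 0%nat _)) Hi) as H.
  replace (Derive Eb (R2 - ((x - a) ^ 2 + (y - b) ^ 2)) * - (2 * (x - a)))
    with (scal (- (2 * (x - a))) (Derive Eb (R2 - ((x - a) ^ 2 + (y - b) ^ 2)))). exact H.
  unfold scal; simpl; unfold mult; simpl. ring.
Qed.

Lemma Phi_inj : forall a b R2, 0 < R2 -> exists M, 0 <= M /\ forall lam p1 p2 q1, Rabs lam * M < 1 ->
  p1 + lam * psi a b R2 p1 p2 = q1 + lam * psi a b R2 q1 p2 -> p1 = q1.
Proof.
  intros a b R2 HR2.
  destruct (continuity_ab_maj (fun x => Rabs (Derive Eb x)) 0 R2 ltac:(lra)) as [mx [Hmxr Hmx]].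
  { intros c _. apply (continuity_pt_comp (Derive Eb) Rabs). apply sm1_cont_D, Eb_sm1. apply Rcontinuity_abs. }
  set (ME := Rabs (Derive Eb mx)).
  assert (HME : 0 <= ME) by apply Rabs_pos.
  exists (ME * (1 + R2)). split. apply Rmult_le_pos; lra.
  intros lam p1 p2 q1 Hl Heq.
  set (df := fun x => Derive Eb (R2 - ((x - a)^2 + (p2 - b)^2)) * (- (2 * (x - a)))).
  assert (Hb : forall x, Rabs (df x) <= ME * (1 + R2)).
  { intros x. unfold df. set (u := R2 - ((x - a)^2 + (p2 - b)^2)).
    destruct (Rle_lt_dec u 0) as [Hu|Hu].
    - rewrite DEb_zero by auto. rewrite Rmult_0_l, Rabs_R0. apply Rmult_le_pos; lra.
    - rewrite Rabs_mult. apply Rmult_le_compat; try apply Rabs_pos.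
      + apply Hmxr. unfold u in *. split. lra. assert (0 <= (x-a)^2) by apply pow2_ge_0.
        assert (0 <= (p2-b)^2) by apply pow2_ge_0. lra.
      + assert (H0 : (x - a)^2 < R2) by (unfold u in Hu; assert (0 <= (p2-b)^2) by apply pow2_ge_0; lra).
        rewrite Rabs_Ropp, Rabs_mult, Rabs_pos_eq by lra.
        assert (2 * Rabs (x - a) <= 1 + (x - a)^2).
        { assert (Rabs (x-a) ^2 = (x - a)^2) by (simpl; rewrite !Rmult_1_r; rewrite <- Rabs_mult; apply Rabs_pos_eq; apply Rle_0_sqr).
          assert (0 <= (Rabs (x - a) - 1)^2) by apply pow2_ge_0. nra. }
        lra. }
  destruct (MVT_gen (fun x => psi a b R2 x p2) q1 p1 df) as [c [Hc Hmvt]].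
  { intros x _. apply psi_derive. }
  { intros x _. apply cont_of_ex_derive. eexists. apply psi_derive. }
  simpl in Hmvt.
  assert (E : p1 - q1 = - lam * df c * (p1 - q1)).
  { replace (p1 - q1) with (- lam * (psi a b R2 p1 p2 - psi a b R2 q1 p2)) at 1 by lra.
    rewrite Hmvt. ring. }
  destruct (Req_dec p1 q1) as [|Hne]; auto. exfalso.
  assert (Hx : 1 = - lam * df c).
  { apply Rmult_eq_reg_r with (p1 - q1). rewrite Rmult_1_l. lra. lra. }
  assert (Rabs (- lam * df c) <= Rabs lam * (ME * (1 + R2))).
  { rewrite Rabs_mult, Rabs_Ropp. apply Rmult_le_compat_l. apply Rabs_pos. apply Hb. }
  rewrite <- Hx, Rabs_R1 in H. lra.
Qed.

Ltac rring := match goal with |- ?a = ?b => change (@eq R a b) end; ring.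

Lemma vel_acc_1d : forall f l h, sm1 f -> sm1 l -> sm1 h -> l 0 = 0 -> Derive l 0 = 0 ->
  Derive (fun t => f t + l t * h t) 0 = Derive f 0 /\
  (h 0 = 0 -> Derive_n (fun t => f t + l t * h t) 2 0 = Derive_n f 2 0).
Proof.
  intros f l h Hf Hl Hh Hl0 Hdl0.
  assert (Hd : forall t, Derive (fun t => f t + l t * h t) t = Derive f t + (Derive l t * h t + l t * Derive h t)).
  { intros t. rewrite Derive_plus. rewrite Derive_mult. reflexivity.
    apply (Hl 0%nat). apply (Hh 0%nat). apply (Hf 0%nat).
    apply ex_derive_mult. apply (Hl 0%nat). apply (Hh 0%nat). }
  split.
  - rewrite Hd, Hl0, Hdl0. rring.
  - intros Hh0. simpl.
    assert (E : (fun x => Derive (fun t => f t + l t * h t) x) = fun t => Derive f t + (Derive l t * h t + l t * Derive h t)).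
    { apply functional_extensionality; intro; apply Hd. }
    rewrite E.
    assert (X1 : forall t, ex_derive (fun t => Derive l t * h t) t)
      by (intros; apply ex_derive_mult; [apply (Hl 1%nat)|apply (Hh 0%nat)]).
    assert (X2 : forall t, ex_derive (fun t => l t * Derive h t) t)
      by (intros; apply ex_derive_mult; [apply (Hl 0%nat)|apply (Hh 1%nat)]).
    rewrite (Derive_plus (Derive f) (fun t => Derive l t * h t + l t * Derive h t)).
    rewrite (Derive_plus (fun t => Derive l t * h t) (fun t => l t * Derive h t)) by auto.
    rewrite (Derive_mult (Derive l) h) by (apply (Hl 1%nat) || apply (Hh 0%nat)).
    rewrite (Derive_mult l (Derive h)) by (apply (Hl 0%nat) || apply (Hh 1%nat)).
    rewrite Hh0, Hl0, Hdl0. rewrite !Rmult_0_l, !Rmult_0_r, !Rplus_0_r. reflexivity.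
    apply (Hf 1%nat).
    apply (ex_derive_plus (fun t => Derive l t * h t) (fun t => l t * Derive h t)); auto.
Qed.

Lemma area_ext : forall L h g, 0 < L -> (forall s, 0 <= s <= 2 * L -> h s = g s) -> area L h = area L g.
Proof.
  intros L h g HL H. unfold area. f_equal. apply RInt_ext.
  rewrite Rmin_left, Rmax_right by lra. intros s Hs.
  assert (E1 : cx h s = cx g s) by (unfold cx; rewrite H; auto; lra).
  assert (E2 : cy h s = cy g s) by (unfold cy; rewrite H; auto; lra).
  rewrite E1, E2. rewrite (Derive_interior (cx h) (cx g) 0 (2 * L)), (Derive_interior (cy h) (cy g) 0 (2 * L)); auto.
  - intros u Hu. unfold cy; rewrite H; auto; lra.
  - intros u Hu. unfold cx; rewrite H; auto; lra.
Qed.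

Lemma cont_at0 : forall f, sm1 f -> forall e, 0 < e -> exists d, 0 < d /\ forall t, Rabs t <= d -> Rabs (f t - f 0) < e.
Proof.
  intros f Hf e He. pose proof (sm1_cont f 0 Hf) as Hc. rewrite continuity_pt_locally in Hc.
  destruct (Hc (mkposreal e He)) as [d Hd]. exists (d/2). split. destruct d; simpl; lra.
  intros t Ht. apply Hd. unfold ball; simpl; unfold AbsRing_ball, abs, minus, plus, opp; simpl.
  rewrite Ropp_0, Rplus_0_r. destruct d; simpl in *; lra.
Qed.

Theorem mainTheorem4 :
  forall (x0 L : R), 0 < x0 -> 0 < L ->
  forall (g : R -> R * R), admissible x0 L g -> arclength_param L g ->
  forall (V : R -> R -> R * R) (tV : R),
    admissible_variation x0 L g V tV ->
    first_order_area_preserving L g V ->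
    exists (Vt : R -> R -> R * R) (tVt : R),
      admissible_variation x0 L g Vt tVt /\
      area_preserving L g Vt tVt /\
      (forall s, 0 <= s <= 2 * L -> var_velocity Vt s = var_velocity V s) /\
      (forall s, (0 <= s <= L / 2 \/ 3 * L / 2 <= s <= 2 * L) ->
         var_acceleration Vt s = var_acceleration V s).
Proof.
  intros x0 L Hx0 HL g Hg Harc V tV HV Hfo.
  destruct HV as [HtV [H1 [H2 [Hg0 Hadm]]]].
  set (V1 := fun s t => fst (V s t)) in *. set (V2 := fun s t => snd (V s t)) in *.
  assert (Hend : forall t, Rabs t <= tV -> V 0 t = (x0, 0) /\ V (2 * L) t = (- x0, 0)).
  { intros t Ht. apply Rabs_le_between in Ht. destruct (Hadm t ltac:(lra)) as [_ [_ [_ [_ [_ [E0 [E2 _]]]]]]].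
    split; [exact E0|exact E2]. }
  assert (HVg : forall s, 0 <= s <= 2 * L -> V1 s 0 = cx g s /\ V2 s 0 = cy g s).
  { intros s Hs. unfold V1, V2, cx, cy. rewrite Hg0; auto. }
  destruct (choose_bump x0 L g HL Hg) as [s0 [eta [c [R2 [Hs1 [Hs2 [Heta [HR2 [Hc HD]]]]]]]]].
  set (a := cx g s0) in *. set (b := cy g s0) in *.
  set (w := bumpw V1 V2 a b R2).
  assert (Hw : smooth2 w) by (apply smooth2_bumpw; auto).
  set (A0 := area L g).
  set (A := AreaF V1 V2 L). set (B := AreaF w V2 L).
  assert (HA : sm1 A) by (apply AreaF_sm1; auto).
  assert (HB : sm1 B) by (apply AreaF_sm1; auto).
  assert (HB0 : B 0 <> 0) by (apply (B0_nonzero x0 L g V1 V2 s0 eta c R2); auto).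
  assert (HA0 : A 0 = A0).
  { change (area L (curve_at V 0) = A0). unfold A0. apply area_ext; auto. }
  assert (HdA0 : Derive A 0 = 0) by (apply (AreaF_deriv0 x0 L g V tV); auto).
  destruct (cont_at0 B HB (Rabs (B 0)) ltac:(apply Rabs_pos_lt; auto)) as [dB [HdB HdBp]].
  assert (HBnz : forall t, Rabs t <= dB -> B t <> 0).
  { intros t Ht Hz. specialize (HdBp t Ht). rewrite Hz, Rminus_0_l, Rabs_Ropp in HdBp. lra. }
  set (rho := fun t => Eb (t ^ 2 - dB ^ 2)).
  assert (Hden : forall t, 0 < B t * B t + rho t).
  { intros t. destruct (Rle_lt_dec (Rabs t) dB) as [Ht|Ht].
    - assert (B t * B t > 0) by (apply Rsqr_pos_lt; auto). pose proof (Eb_nonneg (t^2 - dB^2)). unfold rho. lra.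
    - assert (0 < rho t).
      { unfold rho. apply Eb_pos. assert (Rabs t ^ 2 = t ^ 2) by (rewrite RPow_abs; apply Rabs_pos_eq; apply pow2_ge_0).
        assert (dB ^ 2 < Rabs t ^ 2) by (simpl; nra). lra. }
      assert (0 <= B t * B t) by apply Rle_0_sqr. lra. }
  set (Lam2 := fun (s t : R) => (A0 - A t) * (B t * / (B t * B t + rho t))).
  assert (HLam2 : smooth2 Lam2).
  { unfold Lam2. apply smooth2_mult.
    - apply smooth2_minus. apply smooth2_const. apply smooth2_ft; auto.
    - apply smooth2_mult. apply smooth2_ft; auto.
      apply (smooth2_comp (fun x => 0 < x) Rinv (fun s t => B t * B t + rho t)).
      + apply sm_on_inv.
      + intros; apply Hden.
      + apply smooth2_plus. apply smooth2_mult; apply smooth2_ft; auto.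
        unfold rho. apply (smooth2_comp (fun _ => True) Eb (fun s t => t ^ 2 - dB ^ 2)).
        * apply sm1_on, Eb_sm1.
        * auto.
        * apply smooth2_minus. apply smooth2_sq. apply smooth2_id2. apply smooth2_const. }
  set (lam := fun t => Lam2 0 t).
  assert (Hlam : sm1 lam) by (apply smooth2_slice_t; auto).
  assert (Hlam0 : lam 0 = 0) by (unfold lam, Lam2; rewrite HA0; ring).
  assert (Hdlam0 : Derive lam 0 = 0).
  { unfold lam, Lam2.
    assert (HK : sm1 (fun t => B t * / (B t * B t + rho t))).
    { apply (smooth2_slice_t (fun s t => B t * / (B t * B t + rho t)) 0).
      apply smooth2_mult. apply smooth2_ft; auto.
      apply (smooth2_comp (fun x => 0 < x) Rinv (fun s t => B t * B t + rho t)).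
      + apply sm_on_inv.
      + intros; apply Hden.
      + apply smooth2_plus. apply smooth2_mult; apply smooth2_ft; auto.
        unfold rho. apply (smooth2_comp (fun _ => True) Eb (fun s t => t ^ 2 - dB ^ 2)).
        * apply sm1_on, Eb_sm1.
        * auto.
        * apply smooth2_minus. apply smooth2_sq. apply smooth2_id2. apply smooth2_const. }
    rewrite (Derive_mult (fun t => A0 - A t) (fun t => B t * / (B t * B t + rho t))).
    rewrite Derive_minus, Derive_const, HdA0, HA0. ring.
    apply ex_derive_const. apply (HA 0%nat). 
    apply (ex_derive_minus (K := R_AbsRing) (V := R_NormedModule)). apply ex_derive_const. apply (HA 0%nat).
    apply (HK 0%nat). }
  set (Vt := Vt_of V1 V2 lam w).
  set (Vt1 := fun s t => V1 s t + lam t * w s t).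
  assert (HVt1 : smooth2 Vt1) by (apply smooth2_plus; auto; apply smooth2_mult; auto; apply smooth2_ft; auto).
  assert (Hc0 : curve_at Vt 0 = curve_at V 0).
  { apply functional_extensionality; intro s. unfold curve_at, Vt, Vt_of. rewrite Hlam0.
    apply pair_eq; simpl; unfold V1, V2; ring. }
  set (SpF := fun s t => pd true Vt1 s t * pd true Vt1 s t + pd true V2 s t * pd true V2 s t).
  set (CrF := fun s t => pd true Vt1 s t * pd true (pd true V2) s t + pd true V2 s t * - pd true (pd true Vt1) s t).
  assert (HSp : smooth2 SpF) by (apply smooth2_plus; apply smooth2_mult; apply smooth2_pd; auto).
  assert (HCr : smooth2 CrF).
  { apply smooth2_plus; apply smooth2_mult; try (apply smooth2_pd; auto).
    repeat apply smooth2_pd; auto.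
    apply (smooth2_ext (fun s t => (-1) * pd true (pd true Vt1) s t)). intros; ring.
    apply smooth2_scal. repeat apply smooth2_pd; auto. }
  assert (HSpdot : forall s t, SpF s t = dot (vel (curve_at Vt t) s) (vel (curve_at Vt t) s)) by reflexivity.
  assert (HCrdot : forall s t, CrF s t = dot (vel (curve_at Vt t) s) (perp (acc (curve_at Vt t) s))) by reflexivity.
  assert (Had0 : admissible x0 L (curve_at V 0)) by (apply Hadm; lra).
  destruct (tube SpF 0 (2 * L) ltac:(lra)) as [dS [HdS HdSp]].
  { intros; apply smooth2_cont; auto. }
  { intros s Hs. rewrite HSpdot, Hc0. destruct Had0 as [_ [_ [Hsp _]]]. apply sqrt_pos_inv. apply Hsp; auto. }
  destruct (tube CrF 0 (2 * L) ltac:(lra)) as [dC [HdC HdCp]].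
  { intros; apply smooth2_cont; auto. }
  { intros s Hs. rewrite HCrdot, Hc0. destruct Had0 as [_ [_ [Hsp [Hcu _]]]].
    specialize (Hsp s Hs). specialize (Hcu s Hs). unfold curvature in Hcu.
    assert (0 < speed (curve_at V 0) s ^ 3) by (apply pow_lt; auto).
    set (X := dot (vel (curve_at V 0) s) (perp (acc (curve_at V 0) s))) in *.
    replace X with ((X / speed (curve_at V 0) s ^ 3) * speed (curve_at V 0) s ^ 3) by (field; lra).
    apply Rmult_lt_0_compat; auto. }
  destruct (Phi_inj a b R2 HR2) as [M [HM HMinj]].
  destruct (cont_at0 lam Hlam (/ (M + 1)) ltac:(apply Rinv_0_lt_compat; lra)) as [dL [HdL HdLp]].
  assert (Hlsmall : forall t, Rabs t <= dL -> Rabs (lam t) * M < 1).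
  { intros t Ht. specialize (HdLp t Ht). rewrite Hlam0, Rminus_0_r in HdLp.
    assert (Rabs (lam t) * M <= / (M + 1) * M) by (apply Rmult_le_compat_r; lra).
    assert (/ (M + 1) * M < 1).
    { apply (Rmult_lt_reg_l (M + 1)). lra. field_simplify; lra. }
    lra. }
  set (tVt := Rmin (Rmin tV dB) (Rmin dS (Rmin dC dL))).
  assert (HtVt : 0 < tVt) by (unfold tVt; repeat apply Rmin_glb_lt; lra).
  assert (Ht1 : tVt <= tV) by (unfold tVt; eapply Rle_trans; [apply Rmin_l|apply Rmin_l]).
  assert (Ht2 : tVt <= dB) by (unfold tVt; eapply Rle_trans; [apply Rmin_l|apply Rmin_r]).
  assert (Ht3 : tVt <= dS) by (unfold tVt; eapply Rle_trans; [apply Rmin_r|apply Rmin_l]).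
  assert (Ht4 : tVt <= dC) by (unfold tVt; eapply Rle_trans; [apply Rmin_r|]; eapply Rle_trans; [apply Rmin_r|apply Rmin_l]).
  assert (Ht5 : tVt <= dL) by (unfold tVt; eapply Rle_trans; [apply Rmin_r|]; eapply Rle_trans; [apply Rmin_r|apply Rmin_r]).
  assert (Hw0 : forall s, 0 <= s <= 2 * L -> eta <= Rabs (s - s0) -> w s 0 = 0).
  { intros s Hs Hd. unfold w, bumpw. destruct (HVg s Hs) as [E1 E2]. rewrite E1, E2.
    apply Eb_zero. specialize (HD s Hs Hd). fold a b in HD. lra. }
  destruct Hg as [_ [_ [_ [_ [_ [Hg0' [Hg2' _]]]]]]].
  assert (Hwend : forall t, Rabs t <= tV -> w 0 t = 0 /\ w (2 * L) t = 0).
  { intros t Ht. destruct (Hend t Ht) as [E0 E2]. unfold w, bumpw, V1, V2. rewrite E0, E2. simpl. split.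
    - apply Eb_zero. specialize (HD 0 ltac:(lra) ltac:(rewrite Rabs_left1; lra)).
      unfold cx, cy in HD. rewrite Hg0' in HD. simpl in HD. fold a b in HD. lra.
    - apply Eb_zero. specialize (HD (2 * L) ltac:(lra) ltac:(rewrite Rabs_right; lra)).
      unfold cx, cy in HD. rewrite Hg2' in HD. simpl in HD. fold a b in HD. lra. }
  exists Vt, tVt. split; [|split; [|split]].
  -
    split; [exact HtVt|]. split; [exact HVt1|]. split; [exact H2|]. split.
    { intros s Hs. rewrite <- Hg0 by auto. exact (equal_f Hc0 s). }
    intros t Ht. assert (Hta : Rabs t <= tVt) by (apply Rabs_le_between; lra).
    assert (Hadt : admissible x0 L (curve_at V t)) by (apply Hadm; lra).
    destruct Hadt as [_ [_ [_ [_ [Hinj [_ [_ Hypos]]]]]]].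
    assert (Hsp : forall s, 0 <= s <= 2 * L -> 0 < speed (curve_at Vt t) s).
    { intros s Hs. unfold speed. apply sqrt_lt_R0. rewrite <- HSpdot. apply HdSp; auto; lra. }
    split; [|split; [|split; [|split; [|split; [|split; [|split]]]]]].
    + apply smooth1_sm1. exact (smooth2_slice_s Vt1 t HVt1).
    + apply smooth1_sm1. exact (smooth2_slice_s V2 t H2).
    + exact Hsp.
    + intros s Hs. unfold curvature. rewrite <- HCrdot. apply Rdiv_lt_0_compat.
      apply HdCp; auto; lra. apply pow_lt; auto.
    + intros s1 s2 Hs1' Hs2' Heq. unfold curve_at, Vt, Vt_of in Heq.
      injection Heq as E1 E2. apply Hinj; auto. unfold curve_at.
      assert (E3 : V1 s1 t = V1 s2 t).
      { apply (HMinj (lam t) (V1 s1 t) (V2 s1 t) (V1 s2 t)). apply Hlsmall; lra.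
        change (w s1 t) with (psi a b R2 (V1 s1 t) (V2 s1 t)) in E1.
        change (w s2 t) with (psi a b R2 (V1 s2 t) (V2 s2 t)) in E1.
        rewrite <- E2 in E1. exact E1. }
      apply pair_eq; auto.
    + unfold curve_at, Vt, Vt_of. destruct (Hend t ltac:(lra)) as [E0 _]. destruct (Hwend t ltac:(lra)) as [W0 _].
      rewrite W0. unfold V1, V2. rewrite E0. simpl. apply pair_eq; simpl; ring.
    + unfold curve_at, Vt, Vt_of. destruct (Hend t ltac:(lra)) as [_ E2]. destruct (Hwend t ltac:(lra)) as [_ W2].
      rewrite W2. unfold V1, V2. rewrite E2. simpl. apply pair_eq; simpl; ring.
    + intros s Hs. exact (Hypos s Hs).
  -
    intros t Ht. assert (Hta : Rabs t <= tVt) by (apply Rabs_le_between; lra).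
    unfold Vt. rewrite area_decomp by auto. fold A B.
    unfold lam, Lam2. assert (Hr : rho t = 0).
    { unfold rho. apply Eb_zero. assert (Rabs t ^ 2 = t ^ 2) by (rewrite RPow_abs; apply Rabs_pos_eq; apply pow2_ge_0).
      assert (Rabs t ^ 2 <= dB ^ 2) by (simpl; pose proof (Rabs_pos t); nra). lra. }
    rewrite Hr. fold A0. assert (B t <> 0) by (apply HBnz; lra). field. auto.
  -
    intros s Hs. unfold var_velocity. apply pair_eq; simpl; [|reflexivity].
    apply (vel_acc_1d (fun t => V1 s t) lam (fun t => w s t)); auto using smooth2_slice_t.
  -
    intros s Hs. unfold var_acceleration. apply pair_eq; simpl; [|reflexivity].
    apply (vel_acc_1d (fun t => V1 s t) lam (fun t => w s t)); auto using smooth2_slice_t.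
    apply Hw0. lra. destruct Hs as [Hs|Hs]; [rewrite Rabs_left1|rewrite Rabs_right]; lra.
Qed.
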